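(* Let $G$ be a graph and $F\subseteq E(G)$ such that $G/F$ is a cactus, and let $\mathcal{W}$ be the $G/F$-witness structure of $G$. Then there exists a coloring $f:V(G)\to\{1,2,3\}$ that is compatible with $\mathcal{W}$.
   Context: A cactus is a connected graph in which every edge lies in at most one cycle. For $F\subseteq E(G)$, $G/F$ is the graph whose vertices correspond to the parts of the partition of $V(G)$ into the vertex sets of connected components of $(V(F),F)$ and singletons $\{v\}$ for $v\notin V(F)$, two parts adjacent iff some edge of $G$ joins them; this partition is the $G/F$-witness structure $\mathcal{W}$, and the part corresponding to vertex $t$ of $T=G/F$ is denoted $W(t)$. A witness set is big if it has at least two vertices, singleton otherwise. A cable path in a graph $H$ is a path $(v_1,\dots,v_q)$ such that for each $2\le i\le q-1$, $N_H(v_i)=\{v_{i-1},v_{i+1}\}$. A coloring $f:V(G)\to\{1,2,3\}$ is compatible with the $T$-witness structure $\mathcal{W}$ if: (1) every witness set $W(t)$ is monochromatic (so $f(W(t))$ is well defined); (2) for every edge $t_xt_y\in E(T)$ with $W(t_x),W(t_y)$ both big, $f(W(t_x))\ne f(W(t_y))$; (3) for every cable path $(t_x,t_1,\dots,t_q,t_y)$ in $T$ ($q\ge1$) with $W(t_x),W(t_y)$ big and all $W(t_i)$ ($1\le i\le q$) singleton, $f(W(t_x))\neq f(W(t_1))$ and $f(W(t_y))\ne f(W(t_q))$. *)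

(* Defs.v *)
From mathcomp Require Import all_boot.
Set Implicit Arguments. Unset Strict Implicit. Unset Printing Implicit Defensive.

Section GraphNotions.
Variables (V : finType) (adj : rel V).

Definition gcycle (c : seq V) : bool := [&& uniq c, 2 < size c & cycle adj c].

Definition cedge (c : seq V) (x y : V) : bool :=
  ((x \in c) && (next c x == y)) || ((y \in c) && (next c y == x)).

(* a cactus: connected, and every edge lies in at most one cycle
   (two cycles through a common edge have the same edge set) *)
Definition cactus : Prop :=
  (forall x y, connect adj x y) /\
  (forall c1 c2 x y, gcycle c1 -> gcycle c2 -> cedge c1 x y -> cedge c2 x y ->
     forall u v, cedge c1 u v = cedge c2 u v).

Definition cable_path (s : seq V) : Prop :=
  uniq s /\
  (match s with x :: s' => path adj x s' | [::] => True end) /\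
  (forall (x0 : V) i, 0 < i -> i.+1 < size s ->
     forall u, adj (nth x0 s i) u = (u == nth x0 s i.-1) || (u == nth x0 s i.+1)).
End GraphNotions.

Section Contraction.
Variables (T : finType) (e F : rel T).
(* G = (T, e) a simple graph, F a (symmetric) set of edges of G *)

(* the witness set containing x : connected component of (V(F),F), or {x} *)
Definition wset (x : T) : {set T} := [set y | connect F x y].
Definition wsets : {set {set T}} := [set wset x | x in T].

(* vertices of T = G/F : the witness sets *)
Definition qvert := {A : {set T} | A \in wsets}.

Definition qadj : rel qvert := fun A B =>
  (val A != val B) &&
  [exists x, [exists y, [&& x \in val A, y \in val B & e x y]]].

Definition big (t : qvert) : bool := 1 < #|val t|.

(* compatibility of f : V(G) -> {1,2,3} (here 'I_3) with the witness structure *)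
Definition compatible (f : T -> 'I_3) : Prop :=
  (forall t : qvert, forall x y, x \in val t -> y \in val t -> f x = f y) /\
  (forall tx ty : qvert, qadj tx ty -> big tx -> big ty ->
     forall x y, x \in val tx -> y \in val ty -> f x != f y) /\
  (forall (tx ty : qvert) (ts : seq qvert), 0 < size ts ->
     cable_path qadj (tx :: ts ++ [:: ty]) ->
     big tx -> big ty -> all (fun t => ~~ big t) ts ->
     (forall t1, t1 = head tx ts ->
        forall x y, x \in val tx -> y \in val t1 -> f x != f y) /\
     (forall tq, tq = last tx ts ->
        forall x y, x \in val ty -> y \in val tq -> f x != f y)).
End Contraction.

Arguments wset {T} F x.
Arguments wsets {T} F.
Arguments qvert {T} F.
Arguments qadj {T} e F.
Arguments big {T} F t.
Arguments compatible {T} e F f.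

(* Main.v *)
Require Import Defs.
From mathcomp Require Import all_boot zify.
Set Implicit Arguments. Unset Strict Implicit. Unset Printing Implicit Defensive.

Section Gen.
Variables (V : finType) (adj : rel V).
Hypothesis hsym : symmetric adj.
Hypothesis hirr : irreflexive adj.
Hypothesis hcac : forall c1 c2 x y, gcycle adj c1 -> gcycle adj c2 ->
  cedge c1 x y -> cedge c2 x y -> forall u v, cedge c1 u v = cedge c2 u v.

Definition goodp (S : {set V}) x p :=
  [&& x \in S, all (mem S) p, uniq (x :: p) & path adj x p].

Lemma ext_path (S : {set V}) n : forall x p, goodp S x p -> #|S| - size p <= n ->
  exists x' p', goodp S x' p' /\ forall u, u \in S -> adj x' u -> u \in p'.
Proof.
elim: n => [|n IH] x p gp hn.
  exists x, p; split => // u uS xu; apply/negPn/negP => up.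
  have : size (u :: x :: p) <= #|S|.
    case/and4P: gp => xS aS up' _.
    have uq : uniq (u :: x :: p).
      rewrite cons_uniq up' andbT inE negb_or up andbT.
      by apply/eqP => ux; move: xu; rewrite ux hirr.
    rewrite -(card_uniqP uq); apply: subset_leq_card; apply/subsetP => z.
    by rewrite !inE => /orP[/eqP->|/orP[/eqP->|]] //; move/allP: aS; apply.
  move: hn => /=; lia.
have [/existsP[u /andP[/andP[uS xu] up]]|] := boolP [exists u, (u \in S) && adj x u && (u \notin p)].
  case/and4P: gp => xS aS up' pp.
  have uq : uniq (u :: x :: p).
    rewrite cons_uniq up' andbT inE negb_or up andbT.
    by apply/eqP => ux; move: xu; rewrite ux hirr.
  have hs : size (u :: x :: p) <= #|S|.
    rewrite -(card_uniqP uq); apply: subset_leq_card; apply/subsetP => z.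
    by rewrite !inE => /orP[/eqP->|/orP[/eqP->|]] //; move/allP: aS; apply.
  apply: (IH u (x :: p)).
    by rewrite /goodp uS uq /= xS aS pp hsym xu.
  move: hn hs => /=; lia.
rewrite negb_exists => /forallP H.
exists x, p; split => // u uS xu; move: (H u); rewrite uS xu /=; by move/negPn.
Qed.

Lemma next_head (x : V) s : next (x :: s) x = nth x s 0.
Proof. by rewrite next_nth mem_head /= eqxx. Qed.

Lemma next_mid (x : V) s k : uniq s -> x \notin s -> k < size s ->
  next (x :: s) (nth x s k) = nth x s k.+1.
Proof.
move=> us xs ks; have ns : nth x s k \in s by apply: mem_nth.
rewrite next_nth inE ns orbT /=.
have -> : (x == nth x s k) = false by apply/negbTE; apply: contraNneq xs => ->.
by rewrite index_uniq.
Qed.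

Lemma cyc_ok (x : V) p k : uniq (x :: p) -> path adj x p -> 0 < k -> k < size p ->
  adj x (nth x p k) -> gcycle adj (x :: take k.+1 p).
Proof.
move=> uq pp k0 kp xk; case/andP: uq => xp up.
rewrite /gcycle /= size_takel //; apply/and3P; split.
- rewrite take_uniq // andbT; apply: contra xp; exact: mem_take.
- by [].
- rewrite (take_nth x kp) rcons_path last_rcons -(take_nth x kp) take_path //=.
  by rewrite hsym.
Qed.

Lemma no_two (x : V) p i j : uniq (x :: p) -> path adj x p -> 0 < i -> i < j -> j < size p ->
  adj x (nth x p i) -> adj x (nth x p j) -> False.
Proof.
move=> uq pp i0 ij jp xi xj.
have ip : i < size p by lia.
have g1 := cyc_ok uq pp i0 ip xi.
have g2 := cyc_ok uq pp (ltn_trans i0 ij) jp xj.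
have uq' := uq; case/andP: uq' => xp up.
have ce k : k < size p -> cedge (x :: take k.+1 p) x (nth x p 0).
  by move=> kp; rewrite /cedge mem_head next_head nth_take // eqxx.
have := hcac g1 g2 (ce _ ip) (ce _ jp) x (nth x p i).
set s1 := take i.+1 p; set s2 := take j.+1 p.
have us1 : uniq s1 by apply: take_uniq.
have us2 : uniq s2 by apply: take_uniq.
have xs1 : x \notin s1 by apply: contra xp; apply: mem_take.
have xs2 : x \notin s2 by apply: contra xp; apply: mem_take.
have e1 : nth x p i = nth x s1 i by rewrite nth_take.
have e2 : nth x p i = nth x s2 i by rewrite nth_take //; lia.
have sz1 : size s1 = i.+1 by rewrite size_takel.
have sz2 : size s2 = j.+1 by rewrite size_takel.
have up' : uniq p by [].
have L1 : next (x :: s1) (nth x p i) = x.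
  by rewrite e1 next_mid // ?sz1 // nth_default ?sz1.
have L2 : nth x p i \in x :: s1 by rewrite e1 inE mem_nth ?sz1 ?orbT.
have L3 : next (x :: s2) x != nth x p i.
  rewrite next_head nth_take //; apply/eqP => h.
  have := index_uniq x (ltn_trans i0 ip) up'; rewrite h index_uniq // => h0.
  by rewrite h0 in i0.
have L4 : next (x :: s2) (nth x p i) != x.
  have hij : i < j.+1 by apply: ltnW.
  have hij2 : i.+1 < j.+1 by [].
  have hip : i.+1 < size p by apply: leq_ltn_trans jp.
  rewrite e2 next_mid // ?sz2 //.
  rewrite nth_take //.
  apply: contraNneq xp => <-; apply: mem_nth.
  exact hip.
rewrite /cedge L1 L2 eqxx orbT (negbTE L3) (negbTE L4) !andbF.
by [].
Qed.

Lemma low_deg (S : {set V}) : S != set0 ->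
  exists2 v, v \in S & #|[set u in S | adj v u]| <= 2.
Proof.
case/set0Pn => x0 x0S.
have g0 : goodp S x0 [::] by rewrite /goodp x0S.
have [x [p [gp hp]]] := @ext_path S #|S| x0 [::] g0 (leq_subr _ _).
case/and4P: gp => xS _ uq pp.
exists x => //.
set N := [set u in S | adj x u].
case: (leqP #|N| 2) => // hN; exfalso.
have : 0 < #|N| by apply: leq_trans hN.
rewrite card_gt0 => /set0Pn [m0 m0N].
case: (arg_maxnP (fun u => index u p) m0N) => m mN0 mmax.
have mN : m \in N := mN0.
have : 0 < #|N :\ m :\ nth x p 0|.
  have h1 := cardsD1 m N; have h2 := cardsD1 (nth x p 0) (N :\ m).
  rewrite mN in h1.
  move: hN; rewrite h1 h2 => hN.
  case: (nth x p 0 \in N :\ m) hN => /=; rewrite ?add1n ?add0n !ltnS => // hN.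
  by apply: leq_trans hN.
rewrite card_gt0 => /set0Pn [w]; rewrite !inE => /and3P [wy wm /andP [wS xw]].
move: mN; rewrite inE => /andP [mS xm].
have wp := hp w wS xw; have mp := hp m mS xm.
have hw := nth_index x wp; have hm := nth_index x mp.
have wN : w \in N by rewrite /N inE wS xw.
have ij : index w p <= index m p by apply: mmax.
have i0 : 0 < index w p.
  rewrite lt0n; apply: contra wy => /eqP h0; by rewrite -{1}hw h0.
have ij' : index w p < index m p.
  rewrite ltn_neqAle ij andbT; apply: contra wm => /eqP h; by rewrite -{1}hw h hm.
apply: (@no_two x p (index w p) (index m p)) => //.
- by rewrite index_mem.
- by rewrite hw.
- by rewrite hm.
Qed.

Lemma color3 (S : {set V}) : exists c : V -> 'I_3,
  forall x y, x \in S -> y \in S -> adj x y -> c x != c y.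
Proof.
move: {2}#|S| (leqnn #|S|) => n; elim: n S => [|n IH] S hS.
  exists (fun _ => ord0) => x y xS; move: hS; rewrite leqn0 => /eqP/cards0_eq E.
  by rewrite E inE in xS.
have [->|nS] := eqVneq S set0.
  by exists (fun _ => ord0) => x y; rewrite inE.
have [v vS hv] := low_deg nS.
have hS' : #|S :\ v| <= n.
  move: hS; rewrite (cardsD1 v S) vS add1n ltnS; done.
have [c hc] := IH _ hS'.
set N := [set u in S | adj v u] in hv.
have : 0 < #|~: (c @: N)|.
  have h1 := cardsC (c @: N); rewrite card_ord in h1.
  have h2 := leq_imset_card c N.
  move: h1 h2 hv; move: #|c @: N| #|~: (c @: N)| #|N| => a b d.
  clear; lia.
rewrite card_gt0 => /set0Pn [k]; rewrite inE => kN.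
exists (fun u => if u == v then k else c u) => x y xS yS xy.
have [xv|xv] := eqVneq x v; have [yv|yv] := eqVneq y v.
- by move: xy; rewrite xv yv hirr.
- subst x; apply: contra kN => /eqP ->; apply: imset_f; by rewrite inE yS xy.
- subst y; rewrite eq_sym; apply: contra kN => /eqP ->; apply: imset_f.
  by rewrite inE xS hsym xy.
- by apply: hc => //; rewrite !inE ?xv ?yv.
Qed.
End Gen.

Section Main.
Variables (T : finType) (e F : rel T).
Hypothesis Fs : symmetric F.

Lemma wset_in (x : T) : wset F x \in wsets F.
Proof. by apply: imset_f. Qed.

Definition qof (x : T) : qvert F := exist _ (wset F x) (wset_in x).

Lemma qofP (t : qvert F) x : x \in val t -> qof x = t.
Proof.
case: t => A HA /= xz; apply: val_inj => /=.
case/imsetP: HA xz => z _ -> xz.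
rewrite inE in xz.
apply/setP => y; rewrite !inE; apply/idP/idP => h.
- exact: connect_trans xz h.
- rewrite (sym_connect_sym Fs) in xz; exact: connect_trans xz h.
Qed.
End Main.

Theorem lemma3p1 (T : finType) (e F : rel T) :
  symmetric e -> irreflexive e ->
  symmetric F -> subrel F e ->
  cactus (qadj e F) ->
  exists f : T -> 'I_3, compatible e F f.
Proof.
move=> es ei Fs Fe [conn hcac].
have qs : symmetric (qadj e F).
  move=> A B; rewrite /qadj eq_sym; congr (_ && _).
  apply/existsP/existsP => [[x /existsP[y /and3P[xa yb exy]]]|[x /existsP[y /and3P[xa yb exy]]]];
    exists y; apply/existsP; exists x; by rewrite xa yb es.
have qi : irreflexive (qadj e F) by move=> A; rewrite /qadj eqxx.
have [c hc] := color3 qs qi hcac [set: qvert F].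
have hc' : forall a b, qadj e F a b -> c a != c b.
  by move=> a b; apply: hc; rewrite inE.
exists (fun x => c (qof F x)); split; [|split].
- by move=> t x y xt yt; rewrite (qofP Fs xt) (qofP Fs yt).
- move=> tx ty a _ _ x y xt yt; rewrite (qofP Fs xt) (qofP Fs yt); exact: hc'.
- move=> tx ty ts ts0 [_ [hp _]] _ _ _; rewrite /= cat_path /= andbT in hp.
  case/andP: hp => hp1 hp2; split.
  + move=> t1 -> x y xt yt; rewrite (qofP Fs xt) (qofP Fs yt).
    clear xt yt; case: ts ts0 hp1 hp2 => // a ts _ /= /andP [h _] _; exact: hc'.
  + move=> tq -> x y xt yt; rewrite (qofP Fs xt) (qofP Fs yt).
    by apply: hc'; rewrite qs.
Qed.
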